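(* For both \textsc{OneMinMax} and \textsc{LOTZ}, the crowding distance contribution $\mathrm{CDC}(x,P)$ is diversity-favouring on $\{0,1\}^n\setminus\{0^n,1^n\}$.
   Context: Search space $\{0,1\}^n$; objectives maximised. $\textsc{OneMinMax}(x)=(\sum_ix_i,\,n-\sum_ix_i)$; $\textsc{LOTZ}(x)=(\mathrm{LO}(x),\mathrm{TZ}(x))$ with $\mathrm{LO}$ the number of leading ones and $\mathrm{TZ}$ the number of trailing zeros. Dominance: $y$ dominates $x$ if $f_i(y)\ge f_i(x)$ for all $i$, strictly for some $i$. Pareto set $X^*$, front $F^*=f(X^* )$. Populations $P$ are sets of mutually non-dominated points with distinct objective vectors. CDC: every point of $P$ starts with distance 0; for each objective $m$, sort $P$ ascending by $f_m$ as $P[1],\dots,P[l]$, set the distance of $P[1]$ and $P[l]$ to $\infty$, and for $2\le i\le l-1$ add $(f_m(P[i+1])-f_m(P[i-1]))/(f_m^{\max}-f_m^{\min})$, where $f_m^{\max},f_m^{\min}$ are the maximum and minimum values of objective $m$. Good: w.r.t. $P$, $x\in P\cap X^*$ is good if some Hamming neighbour $y$ of $x$ satisfies $y\in X^*$ and $f(y)\notin f(P)$; otherwise bad. A measure is diversity-favouring on $S$ (w.r.t. $f$) if for every population $P$ and all $x,y\in P\cap X^*\cap S$ with $x$ bad and $y$ good, $\mathrm{score}(x,P)<\mathrm{score}(y,P)$. *)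

(* Defs.v *)
From mathcomp Require Import all_boot all_order all_algebra.
Set Implicit Arguments. Unset Strict Implicit. Unset Printing Implicit Defensive.
Import Order.TTheory GRing.Theory Num.Theory.

Definition bits (n : nat) := {ffun 'I_n -> bool}.

Definition zeros n : bits n := [ffun => false].
Definition onesv n : bits n := [ffun => true].

Definition bitseq_of n (x : bits n) : seq bool := [seq x i | i <- enum 'I_n].

Definition nones n (x : bits n) : nat := \sum_(i < n) (x i : nat).

Definition OneMinMax n (x : bits n) : nat * nat := (nones x, n - nones x).

Definition LO n (x : bits n) : nat := find (fun b => ~~ b) (bitseq_of x).
Definition TZ n (x : bits n) : nat := find id (rev (bitseq_of x)).

Definition LOTZ n (x : bits n) : nat * nat := (LO x, TZ x).

Definition obj (T : Type) (f : T -> nat * nat) (m : 'I_2) (x : T) : nat :=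
  if val m == 0 then (f x).1 else (f x).2.

Definition dominates (T : Type) (f : T -> nat * nat) (y x : T) : bool :=
  [&& (f x).1 <= (f y).1, (f x).2 <= (f y).2 &
      ((f x).1 < (f y).1) || ((f x).2 < (f y).2)].

Definition pareto n (f : bits n -> nat * nat) (x : bits n) : bool :=
  [forall y, ~~ dominates f y x].

Definition population n (f : bits n -> nat * nat) (P : {set bits n}) : Prop :=
  (forall x y, x \in P -> y \in P -> ~~ dominates f x y) /\
  (forall x y, x \in P -> y \in P -> f x = f y -> x = y).

Definition hamming_neighbour n (x y : bits n) : bool :=
  #|[set i | x i != y i]| == 1.

Definition good n (f : bits n -> nat * nat) (P : {set bits n}) (x : bits n) : bool :=
  [&& x \in P, pareto f x &
   [exists y, [&& hamming_neighbour x y, pareto f y &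
                  ~~ [exists z in P, f z == f y]]]].

Definition bad n (f : bits n -> nat * nat) (P : {set bits n}) (x : bits n) : bool :=
  [&& x \in P, pareto f x & ~~ good f P x].

(* extended nonnegative reals for distances: finite rational or infinity *)
Inductive ext := Fin of rat | Inf.

Definition ext_lt (a b : ext) : bool :=
  match a, b with
  | Fin a, Fin b => (a < b)%R
  | Fin _, Inf => true
  | Inf, _ => false
  end.

Definition fmax n (f : bits n -> nat * nat) (m : 'I_2) : nat :=
  \max_(x : bits n) obj f m x.
Definition fmin n (f : bits n -> nat * nat) (m : 'I_2) : nat :=
  \big[minn/fmax f m]_(x : bits n) obj f m x.

Definition sortedP n (f : bits n -> nat * nat) (m : 'I_2) (P : {set bits n}) :=
  sort (fun a b => obj f m a <= obj f m b) (enum P).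

Definition boundary n (f : bits n -> nat * nat) (m : 'I_2) (P : {set bits n})
  (x : bits n) : bool :=
  let s := sortedP f m P in
  (index x s == 0) || (index x s == (size s).-1).

Definition contrib n (f : bits n -> nat * nat) (m : 'I_2) (P : {set bits n})
  (x : bits n) : rat :=
  let s := sortedP f m P in
  let i := index x s in
  (((obj f m (nth x s i.+1))%:R - (obj f m (nth x s i.-1))%:R)
     / ((fmax f m)%:R - (fmin f m)%:R))%R.

Definition CDC n (f : bits n -> nat * nat) (P : {set bits n}) (x : bits n) : ext :=
  if [exists m : 'I_2, boundary f m P x] then Inf
  else Fin (\sum_(m < 2) contrib f m P x)%R.

Definition diversity_favouring n (f : bits n -> nat * nat)
  (score : bits n -> {set bits n} -> ext) (S : pred (bits n)) : Prop :=
  forall P : {set bits n}, population f P ->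
  forall x y : bits n,
    x \in P -> pareto f x -> S x ->
    y \in P -> pareto f y -> S y ->
    bad f P x -> good f P y -> ext_lt (score x P) (score y P).

Definition not_const n : pred (bits n) :=
  fun x => (x != zeros n) && (x != onesv n).

(* Main.v *)
Require Import Defs.
From mathcomp Require Import all_boot all_order all_algebra.
From mathcomp Require Import zify ring lra.
Import Order.TTheory GRing.Theory Num.Theory.


Section Gen.
Variables (n : nat) (f : bits n -> nat * nat) (P : {set bits n}) (m : 'I_2).
Let g := obj f m.
Hypothesis inj : forall a b, a \in P -> b \in P -> g a = g b -> a = b.
Let s := Defs.sortedP f m P.

Lemma s_mem z : (z \in s) = (z \in P).
Proof. by rewrite /s /Defs.sortedP mem_sort mem_enum. Qed.
Lemma s_uniq : uniq s.
Proof. by rewrite /s /Defs.sortedP sort_uniq enum_uniq. Qed.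
Lemma s_sorted : sorted (fun a b => g a <= g b) s.
Proof. apply: sort_sorted => a b; exact: leq_total. Qed.

Lemma s_mono x0 i j : i <= j -> j < size s -> g (nth x0 s i) <= g (nth x0 s j).
Proof.
move=> ij js.
have tr : transitive (fun a b => g a <= g b).
  move=> a b c /= h1 h2; exact: leq_trans h1 h2.
have rf : reflexive (fun a b => g a <= g b) by move=> a /=.
apply: (sorted_leq_nth tr rf x0 s_sorted) => //.
- by rewrite inE (leq_ltn_trans ij js).
Qed.

Lemma s_smono x0 i j : i < j -> j < size s -> g (nth x0 s i) < g (nth x0 s j).
Proof.
move=> ij js; have is_ : i < size s by apply: ltn_trans ij js.
rewrite ltn_neqAle s_mono ?(ltnW ij) // andbT.
apply/negP => /eqP E.
have : nth x0 s i = nth x0 s j.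
  apply: inj => //; rewrite -s_mem; exact: mem_nth.
move/eqP; rewrite nth_uniq ?s_uniq //; move/eqP => ij'.
by rewrite ij' ltnn in ij.
Qed.

Lemma s_key x z : x \in P -> z \in P -> (g z < g x) = (index z s < index x s).
Proof.
move=> xP zP.
have xs : x \in s by rewrite s_mem.
have zs : z \in s by rewrite s_mem.
have xi : index x s < size s by rewrite index_mem.
have zi : index z s < size s by rewrite index_mem.
case: (ltnP (index z s) (index x s)) => h.
  by have := s_smono x _ _ h xi; rewrite !nth_index.
by have := s_mono x _ _ h zi; rewrite !nth_index // leqNgt => /negbTE.
Qed.

Definition Dm := ((fmax f m)%:R - (fmin f m)%:R : rat)%R.

Lemma fmin_le z : fmin f m <= g z.
Proof.
rewrite /fmin /g.
have H : forall r d, z \in r -> \big[minn/d]_(i <- r) obj f m i <= obj f m z.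
  elim=> [//|a r IH] d; rewrite inE big_cons => /orP[/eqP ->|zr].
    exact: geq_minl.
  exact: leq_trans (geq_minr _ _) (IH d zr).
exact: H (mem_index_enum z).
Qed.
Lemma fmax_ge z : g z <= fmax f m.
Proof. exact: (leq_bigmax (F := fun x => obj f m x)). Qed.

Lemma notbound x a b : x \in P -> a \in P -> b \in P -> g a < g x -> g x < g b ->
  ~~ boundary f m P x.
Proof.
move=> xP aP bP ax xb.
rewrite (s_key _ _ xP aP) in ax. rewrite (s_key _ _ bP xP) in xb.
have bi : index b s < size s by rewrite index_mem s_mem.
rewrite /boundary -/s negb_or; apply/andP; split; apply/eqP;
  move: (index x s) (index a s) (index b s) (size s) ax xb bi => *; lia.
Qed.

Lemma interior x : x \in P -> ~~ boundary f m P x ->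
  exists p q, [/\ p \in P, q \in P, g p < g x, g x < g q & [/\
     (forall z, z \in P -> g z < g x -> g z <= g p),
     (forall z, z \in P -> g x < g z -> g q <= g z) &
     contrib f m P x = (((g q)%:R - (g p)%:R) / Dm)%R]].
Proof.
move=> xP; rewrite /boundary -/s negb_or => /andP[/eqP h0 /eqP h1].
have xs : x \in s by rewrite s_mem.
have xi : index x s < size s by rewrite index_mem.
move Ei: (index x s) h0 h1 xi => i h0 h1 xi.
have i1 : i.-1 < size s by apply: leq_ltn_trans (leq_pred i) xi.
have i2 : i.+1 < size s.
  rewrite ltn_neqAle xi andbT; apply/eqP => E; apply: h1; rewrite -E //.
have i3 : i.-1 < i by case: i h0 {Ei xi h1 i1 i2}.
exists (nth x s i.-1), (nth x s i.+1).
have pP : nth x s i.-1 \in P by rewrite -s_mem mem_nth.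
have qP : nth x s i.+1 \in P by rewrite -s_mem mem_nth.
have ip : index (nth x s i.-1) s = i.-1 by rewrite index_uniq ?s_uniq.
have iq : index (nth x s i.+1) s = i.+1 by rewrite index_uniq ?s_uniq.
split => //; last split.
- by rewrite (s_key _ _ xP pP) ip Ei.
- by rewrite (s_key _ _ qP xP) iq Ei.
- move=> z zP; rewrite (s_key _ _ xP zP) Ei => zi.
  have zs : index z s < size s by rewrite index_mem s_mem.
  have := s_mono x (index z s) i.-1. rewrite nth_index ?s_mem //.
  move=> H; apply: H => //; move: zi; clear; case: i => //.
- move=> z zP; rewrite (s_key _ _ zP xP) Ei => zi.
  have zs : index z s < size s by rewrite index_mem s_mem.
  have := s_mono x i.+1 (index z s). rewrite nth_index ?s_mem //.
  by move=> H; apply: H.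
- by rewrite /contrib -/s Ei.
Qed.

End Gen.
Arguments Dm {n}.


Lemma pop_inj n (f : bits n -> nat * nat) P m : population f P ->
  forall a b, a \in P -> b \in P -> obj f m a = obj f m b -> a = b.
Proof.
case=> nd fi a b aP bP E; apply: fi => //.
have := nd a b aP bP; have := nd b a bP aP.
rewrite /dominates /obj in E *.
case: (f a) (f b) E => [a1 a2] [b1 b2] /=.
case: ifP => _ E; subst => /=; rewrite !leqnn /= !ltnn /=.
- case: (ltngtP a2 b2) => //= -> //.
- case: (ltngtP a1 b1) => //= -> //.
Qed.

Lemma gen_main n (f : bits n -> nat * nat) P x y :
  population f P -> x \in P -> y \in P ->
  (forall m, exists a b, [/\ a \in P, b \in P, obj f m a + 1 = obj f m x &
                                obj f m b = obj f m x + 1]) ->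
  (exists m, forall a, a \in P -> obj f m a + 1 != obj f m y) ->
  ext_lt (CDC f P x) (CDC f P y).
Proof.
move=> pop xP yP bx [m0 gy].
have inj m := @pop_inj _ _ _ m pop.
have nbx m : ~~ boundary f m P x.
  have [a [b [aP bP ha hb]]] := bx m.
  apply: (@notbound _ _ _ m (inj m) x a b xP aP bP); lia.
have cx m : exists D : rat, [/\ (0 < D)%R, Dm f m = D & contrib f m P x = 2 / D]%R.
  have [a [b [aP bP ha hb]]] := bx m.
  have [p [q [pP qP px xq [hp hq ->]]]] := @interior _ _ _ m (inj m) x xP (nbx m).
  have h1 := hp a aP; have h2 := hq b bP.
  exists (Dm f m); split => //.
    rewrite /Dm subr_gt0 ltr_nat.
    apply: (leq_ltn_trans (@fmin_le _ f m p)); apply: (leq_trans px); exact: (@fmax_ge _ f m).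
  have -> : obj f m q = obj f m p + 2 by lia.
  by rewrite natrD addrAC subrr add0r.
rewrite /CDC; have -> : [exists m, boundary f m P x] = false.
  by apply/negbTE/existsPn => m; exact: nbx.
case: ifP => // /existsPn nby /=.
have cy m : exists a : rat, [/\ (2 <= a)%R, (m = m0 -> 3 <= a)%R &
      contrib f m P y = a / Dm f m]%R.
  have [p [q [pP qP py yq [hp hq ->]]]] := @interior _ _ _ m (inj m) y yP (nby m).
  exists ((obj f m q)%:R - (obj f m p)%:R)%R; split => //.
    rewrite lerBrDr -natrD ler_nat; lia.
  move=> E; subst m; have := gy p pP => h.
  rewrite lerBrDr -natrD ler_nat; lia.
rewrite !big_ord_recl !big_ord0 !addr0.
have [D0 [D0p D0e c0]] := cx ord0.
have [D1 [D1p D1e c1]] := cx (lift ord0 ord0).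
have [a0 [a0h a0s d0]] := cy ord0.
have [a1 [a1h a1s d1]] := cy (lift ord0 ord0).
rewrite c0 c1 d0 d1 D0e D1e.
have u0p : (0 < D0^-1)%R by rewrite invr_gt0.
have u1p : (0 < D1^-1)%R by rewrite invr_gt0.
move: u0p u1p; set u0 := (D0^-1)%R; set u1 := (D1^-1)%R => u0p u1p.
case: (eqVneq m0 ord0) => [E|ne].
  have := a0s (esym E) => a03; nra.
have E : lift ord0 ord0 = m0.
  by apply/val_inj; move: ne; clear; case: m0 => [[|[|]]] //= *; rewrite -val_eqE.
have := a1s E => a13; nra.
Qed.

Section Spec.
Variable n : nat.
Implicit Types x y z : bits n.

Lemma size_bs x : size (bitseq_of x) = n.
Proof. by rewrite /bitseq_of size_map size_enum_ord. Qed.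

Lemma nth_bs x (i : 'I_n) : nth false (bitseq_of x) i = x i.
Proof. by rewrite /bitseq_of (nth_map i) ?size_enum_ord // nth_ord_enum. Qed.

Lemma nones_le x : nones x <= n.
Proof.
rewrite /nones -[X in _ <= X]card_ord -sum1_card.
by apply: leq_sum => i _; case: (x i).
Qed.

Lemma nones_diff x z p : (forall i, i != p -> z i = x i) ->
  nones z + x p = nones x + z p.
Proof.
move=> h; rewrite /nones (bigD1 p) //= [in RHS](bigD1 p) //=.
rewrite (eq_bigr (fun i => (x i : nat))); last by move=> i /h ->.
by rewrite addnC addnA [RHS]addnAC.
Qed.

Lemma hn_nones x z : hamming_neighbour x z ->
  exists p, z p = ~~ x p /\ (nones z + 1 = nones x \/ nones z = nones x + 1).
Proof.
move/cards1P => [p Hp]; exists p.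
have hp : z p = ~~ x p.
  have : p \in [set i | x i != z i] by rewrite Hp set11.
  by rewrite inE; case: (x p); case: (z p).
split => //.
have := @nones_diff x z p.
have h : forall i, i != p -> z i = x i.
  move=> i ip; apply/eqP; rewrite eq_sym; apply/negP => /negP H.
  have : i \in [set i | x i != z i] by rewrite inE.
  by rewrite Hp inE (negbTE ip).
move=> /(_ h); rewrite hp; case: (x p) => /=; lia.
Qed.

Definition flip x (p : 'I_n) : bits n := [ffun i => if i == p then ~~ x i else x i].

Lemma hn_flip x p : hamming_neighbour x (flip x p).
Proof.
rewrite /hamming_neighbour (_ : [set i | x i != flip x p i] = [set p]) ?cards1 //.
apply/setP => i; rewrite !inE ffunE; case: (eqVneq i p) => _; by case: (x i).
Qed.

Lemma nones_flip x p : nones (flip x p) + x p = nones x + ~~ x p.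
Proof.
have -> : ~~ x p = flip x p p by rewrite ffunE eqxx.
apply: nones_diff => i ip; by rewrite ffunE (negbTE ip).
Qed.

Lemma exists_bit x b : x != [ffun => ~~ b] -> exists p, x p = b.
Proof.
case: (pickP (fun p => x p == b)) => [p /eqP|H]; first by exists p.
case/negP; apply/eqP/ffunP => i; rewrite ffunE.
have := H i; rewrite /= => Hi; by destruct (x i), b.
Qed.

Lemma omm_pareto x : pareto (@OneMinMax n) x.
Proof.
apply/forallP => y; rewrite /dominates /OneMinMax /=.
have := nones_le x; have := nones_le y; lia.
Qed.

Lemma omm_bad P x : population (@OneMinMax n) P -> x \in P -> not_const x ->
  bad (@OneMinMax n) P x ->
  forall m, exists a b, [/\ a \in P, b \in P, obj (@OneMinMax n) m a + 1 = obj (@OneMinMax n) m x &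
                                obj (@OneMinMax n) m b = obj (@OneMinMax n) m x + 1].
Proof.
move=> pop xP /andP[nz no] /and3P[_ _ ng].
have H y : hamming_neighbour x y -> exists2 z, z \in P & OneMinMax z = OneMinMax y.
  move=> hy; move: ng; rewrite /good xP omm_pareto /=.
  move/existsPn/(_ y); rewrite hy omm_pareto /= negbK.
  by case/existsP => z /andP[zP /eqP E]; exists z.
have [p xp] := @exists_bit x true nz.
have [q xq] := @exists_bit x false no.
have [z1 z1P E1] := H _ (hn_flip x p).
have [z2 z2P E2] := H _ (hn_flip x q).
have f1 := nones_flip x p; have f2 := nones_flip x q.
rewrite xp in f1; rewrite xq in f2.
have l1 := nones_le z1; have l2 := nones_le z2; have lx := nones_le x.
move: E1 E2; rewrite /OneMinMax => [[e1 _]] [[e2 _]].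
move=> m; rewrite /obj /OneMinMax /=; case: ifP => _.
- exists z1, z2; split => //=; lia.
- exists z2, z1; split => //=; lia.
Qed.

Lemma omm_good P y : population (@OneMinMax n) P -> good (@OneMinMax n) P y ->
  exists m, forall a, a \in P -> obj (@OneMinMax n) m a + 1 != obj (@OneMinMax n) m y.
Proof.
move=> pop /and3P[yP _ /existsP[z /and3P[hz _ nz]]].
have [p [_ hn]] := @hn_nones y z hz.
have la := nones_le; have ly := nones_le y; have lz := nones_le z.
case: hn => hn.
- exists ord0 => a aP; apply/negP => /eqP E; case/existsP: nz; exists a.
  rewrite aP /OneMinMax; move: E; rewrite /obj /OneMinMax /= => E.
  have la' := la a; apply/eqP; congr pair; lia.
- exists ord_max => a aP; apply/negP => /eqP E; case/existsP: nz; exists a.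
  rewrite aP /OneMinMax; move: E; rewrite /obj /OneMinMax /= => E.
  have la' := la a; apply/eqP; congr pair; lia.
Qed.


Definition stair l : bits n := [ffun j : 'I_n => val j < l].

Lemma bs_stair l : l <= n -> bitseq_of (stair l) = nseq l true ++ nseq (n - l) false.
Proof.
move=> ln; apply: (@eq_from_nth _ false).
  by rewrite size_bs size_cat !size_nseq; lia.
move=> i; rewrite size_bs => hi.
have := nth_bs (stair l) (Ordinal hi); rewrite /= => ->.
rewrite ffunE /= nth_cat size_nseq !nth_nseq.
by case: (i < l) => //; case: (_ < _).
Qed.

Lemma LO_stair l : l <= n -> LO (stair l) = l.
Proof.
move=> ln; rewrite /LO bs_stair // find_cat has_nseq andbF size_nseq.
by case: (n - l) => [|k] /=; rewrite addn0.
Qed.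

Lemma TZ_stair l : l <= n -> TZ (stair l) = n - l.
Proof.
move=> ln; rewrite /TZ bs_stair // rev_cat !rev_nseq find_cat has_nseq andbF size_nseq.
by case: l {ln} => [|k] /=; rewrite addn0.
Qed.

Lemma LO_le x : LO x <= n.
Proof. by rewrite /LO -[X in _ <= X](size_bs x) find_size. Qed.
Lemma TZ_le x : TZ x <= n.
Proof. by rewrite /TZ -[X in _ <= X](size_bs x) -size_rev find_size. Qed.

Lemma LOTZ_le x : LO x + TZ x <= n.
Proof.
rewrite leqNgt; apply/negP => h.
have la := LO_le x; have lb := TZ_le x.
have j1 : n - TZ x < LO x by lia.
have h1 := before_find false j1.
have j2 : (TZ x).-1 < TZ x by lia.
have h2 := before_find false j2.
have r : (TZ x).-1 < size (bitseq_of x) by rewrite size_bs; lia.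
rewrite (nth_rev _ r) size_bs in h2.
have e : n - (TZ x).-1.+1 = n - TZ x by lia.
rewrite e in h2.
by rewrite h2 in h1.
Qed.

Lemma pareto_stair l : l <= n -> pareto (@LOTZ n) (stair l).
Proof.
move=> ln; apply/forallP => y; rewrite /dominates /LOTZ /= LO_stair // TZ_stair //.
have := LOTZ_le y; lia.
Qed.

Lemma pareto_LOTZ x : pareto (@LOTZ n) x -> x = stair (LO x) /\ LO x + TZ x = n.
Proof.
move=> px.
have la := LO_le x; have lb := TZ_le x; have lab := LOTZ_le x.
have E : LO x + TZ x = n.
  move/forallP: px => /(_ (stair (LO x))).
  rewrite /dominates /LOTZ /= LO_stair // TZ_stair //; lia.
split => //; apply/ffunP => j; rewrite ffunE.
case: (ltnP j (LO x)) => hj.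
  by have := before_find false hj; rewrite nth_bs; case: (x j).
have hk : n - j.+1 < TZ x by have := ltn_ord j; lia.
have r : n - j.+1 < size (bitseq_of x) by rewrite size_bs; have := ltn_ord j; lia.
have := before_find false hk; rewrite (nth_rev _ r) size_bs.
have -> : n - (n - j.+1).+1 = j by have := ltn_ord j; lia.
by rewrite nth_bs /= => ->.
Qed.

Lemma nones_stair l : l <= n -> nones (stair l) = l.
Proof.
move=> ln; rewrite /nones.
rewrite (eq_bigr (fun i : 'I_n => nat_of_bool (val i < l))); last by move=> i _; rewrite ffunE.
rewrite -(big_mkord xpredT (fun i => nat_of_bool (i < l))).
rewrite (big_cat_nat (n := l)) //=.
rewrite (eq_big_nat _ _ (F2 := fun _ => 1)); last by move=> i /andP[_ ->].
rewrite [X in _ + X](eq_big_nat _ _ (F2 := fun _ => 0)); last first.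
  by move=> i /andP[h _]; rewrite ltnNge h.
by rewrite !sum_nat_const_nat; lia.
Qed.

Lemma lotz_bad P x : population (@LOTZ n) P -> x \in P -> pareto (@LOTZ n) x -> not_const x ->
  bad (@LOTZ n) P x ->
  forall m, exists a b, [/\ a \in P, b \in P, obj (@LOTZ n) m a + 1 = obj (@LOTZ n) m x &
                                obj (@LOTZ n) m b = obj (@LOTZ n) m x + 1].
Proof.
move=> pop xP px /andP[nz no] /and3P[_ _ ng].
have H y : hamming_neighbour x y -> pareto (@LOTZ n) y ->
    exists2 z, z \in P & LOTZ z = LOTZ y.
  move=> hy py; move: ng; rewrite /good xP px /=.
  move/existsPn/(_ y); rewrite hy py /= negbK.
  by case/existsP => z /andP[zP /eqP E]; exists z.
have [Ex Es] := @pareto_LOTZ x px.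
set i := LO x in Ex Es.
have i0 : i != 0.
  apply/eqP => E; move: nz; rewrite Ex E; case/negP; apply/eqP/ffunP => j.
  by rewrite !ffunE.
have iN : i != n.
  apply/eqP => E; move: no; rewrite Ex E; case/negP; apply/eqP/ffunP => j.
  by rewrite !ffunE ltn_ord.
have ip : i.-1 < n by lia.
have iq : i < n by lia.
have F1 : flip x (Ordinal ip) = stair i.-1.
  apply/ffunP => j; rewrite Ex !ffunE -val_eqE /=; case: eqP => E; lia.
have F2 : flip x (Ordinal iq) = stair i.+1.
  apply/ffunP => j; rewrite Ex !ffunE -val_eqE /=; case: eqP => E; lia.
have [z1 z1P E1] := H _ (hn_flip x (Ordinal ip)) (ltac:(rewrite F1; apply: pareto_stair; lia)).
have [z2 z2P E2] := H _ (hn_flip x (Ordinal iq)) (ltac:(rewrite F2; apply: pareto_stair; lia)).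
rewrite F1 /LOTZ LO_stair ?TZ_stair in E1; try lia.
rewrite F2 /LOTZ LO_stair ?TZ_stair in E2; try lia.
case: E1 => e1 e1'; case: E2 => e2 e2'.
move=> m; rewrite /obj /LOTZ /=; case: ifP => _.
- exists z1, z2; split => //=; rewrite -/i; lia.
- exists z2, z1; split => //=; lia.
Qed.

Lemma lotz_good P y : population (@LOTZ n) P -> y \in P -> pareto (@LOTZ n) y ->
  good (@LOTZ n) P y ->
  exists m, forall a, a \in P -> obj (@LOTZ n) m a + 1 != obj (@LOTZ n) m y.
Proof.
move=> [nd _] yP py /and3P[_ _ /existsP[z /and3P[hz pz nz]]].
have [Ey Eys] := @pareto_LOTZ y py; have [Ez Ezs] := @pareto_LOTZ z pz.
have [p [_ hn]] := @hn_nones y z hz.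
rewrite Ey Ez !nones_stair in hn; try exact: LO_le.
case: hn => hn.
- exists ord0 => a aP; apply/negP => /eqP E; case/existsP: nz; exists a.
  move: E; rewrite aP /obj /LOTZ /= => E.
  have := nd y a yP aP; rewrite /dominates /LOTZ /=.
  have := LOTZ_le a => h1 h2.
  apply/eqP; congr pair; lia.
- exists ord_max => a aP; apply/negP => /eqP E; case/existsP: nz; exists a.
  move: E; rewrite aP /obj /LOTZ /= => E.
  have := nd y a yP aP; rewrite /dominates /LOTZ /=.
  have := LOTZ_le a => h1 h2.
  apply/eqP; congr pair; lia.
Qed.

End Spec.

Theorem lemma2 (n : nat) :
  diversity_favouring (@OneMinMax n) (fun x P => CDC (@OneMinMax n) P x) (@not_const n) /\
  diversity_favouring (@LOTZ n) (fun x P => CDC (@LOTZ n) P x) (@not_const n).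
Proof.
split => P pop x y xP px Sx yP py Sy bx gy.
- apply: (@gen_main n _ P x y pop xP yP).
    exact: (@omm_bad n P x pop xP Sx bx).
  exact: (@omm_good n P y pop gy).
- apply: (@gen_main n _ P x y pop xP yP).
    exact: (@lotz_bad n P x pop xP px Sx bx).
  exact: (@lotz_good n P y pop yP py gy).
Qed.
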